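(* Let $(\mathbf{x}_i,y_i)$, $i=1,\dots,n$, be training samples with $\mathbf{x}_i\in\mathbb{R}^d$, $y_i\in\{1,\dots,L\}$, let $\mathbf{x}^*_{i'}\in\mathbb{R}^d$, $i'=1,\dots,m$, be universum samples, and let $C,C^*>0$, $\Delta\ge0$. Problem (MU) is $$\min_{\mathbf{w}_1,\dots,\mathbf{w}_L,\boldsymbol\xi,\boldsymbol\zeta}\ \tfrac12\sum_{l=1}^L\|\mathbf{w}_l\|_2^2+C\sum_{i=1}^n\xi_i+C^*\sum_{i'=1}^m\sum_{k=1}^L\zeta_{i'k}$$ subject to $(\mathbf{w}_{y_i}-\mathbf{w}_l)^\top\mathbf{x}_i\ge 1-\delta_{il}-\xi_i$ for all $i\le n$, $l\le L$, and $\big|\mathbf{w}_k^\top\mathbf{x}^*_{i'}-\max_{l}\mathbf{w}_l^\top\mathbf{x}^*_{i'}\big|\le\Delta+\zeta_{i'k}$, $\zeta_{i'k}\ge0$ for all $i'\le m$, $k\le L$. Problem (CS) is the Crammer–Singer multiclass SVM on the augmented data set of $n+mL$ samples, where samples $i=1,\dots,n$ are the training samples with $C_i=C$, $e_{il}=1-\delta_{il}$, and for $i'=1,\dots,m$, $k=1,\dots,L$, the sample with index $i=n+(i'-1)L+k$ is $(\mathbf{x}_i,y_i)=(\mathbf{x}^*_{i'},k)$ with $C_i=C^*$ and $e_{il}=-\Delta(1-\delta_{il})$: $$\min_{\mathbf{w}_1,\dots,\mathbf{w}_L,\boldsymbol\xi}\ \tfrac12\sum_{l}\|\mathbf{w}_l\|_2^2+\sum_{i=1}^{n+mL}C_i\xi_i\quad\text{s.t.}\quad(\mathbf{w}_{y_i}-\mathbf{w}_l)^\top\mathbf{x}_i\ge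 e_{il}-\xi_i\ \ \forall i,l.$$ Then (MU) and (CS) are equivalent: for every fixed $(\mathbf{w}_1,\dots,\mathbf{w}_L)$, each universum sample contributes the same amount to the objective of both problems after minimizing over the slack variables, so the two problems have the same objective as a function of $(\mathbf{w}_1,\dots,\mathbf{w}_L)$ and hence the same optimal solutions in $(\mathbf{w}_1,\dots,\mathbf{w}_L)$.
   Context: $\delta_{il}=1$ if $y_i=l$ and $0$ otherwise (with $y_i$ the label of the indexed sample). *)

(* Defs.v *)
From mathcomp Require Import all_boot all_order all_algebra.
Set Implicit Arguments. Unset Strict Implicit. Unset Printing Implicit Defensive.
Import Order.TTheory GRing.Theory Num.Theory.
Local Open Scope ring_scope.

Section Defs.
Variable R : realFieldType.
Variables (d L : nat).

Definition dotp (u v : 'rV[R]_d) : R := \sum_(j < d) u 0 j * v 0 j.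

Definition kdelta (y l : 'I_L) : R := (y == l)%:R.

(* Maximum of a family indexed by the L classes (L >= 1 whenever it is used). *)
Definition maxL (f : 'I_L -> R) : R :=
  \big[Num.max/head 0 [seq f l | l <- enum 'I_L]]_(l < L) f l.

Definition reg (W : 'I_L -> 'rV[R]_d) : R :=
  2^-1 * \sum_(l < L) \sum_(j < d) (W l 0 j) ^+ 2.

Definition mu_feas (n m : nat) (x : 'I_n -> 'rV[R]_d) (y : 'I_n -> 'I_L)
  (xs : 'I_m -> 'rV[R]_d) (Delta : R)
  (W : 'I_L -> 'rV[R]_d) (xi : 'I_n -> R) (zeta : 'I_m -> 'I_L -> R) : Prop :=
  (forall (i : 'I_n) (l : 'I_L),
      1 - kdelta (y i) l - xi i <= dotp (W (y i) - W l) (x i)) /\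
  (forall (i' : 'I_m) (k : 'I_L),
      `|dotp (W k) (xs i') - maxL (fun l => dotp (W l) (xs i'))| <= Delta + zeta i' k
      /\ 0 <= zeta i' k).

Definition mu_obj (n m : nat) (C Cs : R)
  (W : 'I_L -> 'rV[R]_d) (xi : 'I_n -> R) (zeta : 'I_m -> 'I_L -> R) : R :=
  reg W + C * \sum_(i < n) xi i + Cs * \sum_(i' < m) \sum_(k < L) zeta i' k.

Definition cs_feas (I : finType) (X : I -> 'rV[R]_d) (Y : I -> 'I_L)
  (e : I -> 'I_L -> R) (W : 'I_L -> 'rV[R]_d) (xi : I -> R) : Prop :=
  forall (i : I) (l : 'I_L), e i l - xi i <= dotp (W (Y i) - W l) (X i).

Definition cs_obj (I : finType) (Cw : I -> R)
  (W : 'I_L -> 'rV[R]_d) (xi : I -> R) : R :=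
  reg W + \sum_(i : I) Cw i * xi i.

(* ---------------- Augmented data set for (CS) ----------------
   Index set: inl i  <-> sample i (1 <= i <= n);
              inr (i', k) <-> sample n + (i'-1) L + k. *)
Definition aug_idx (n m : nat) : finType := ('I_n + ('I_m * 'I_L))%type.

Definition augX (n m : nat) (x : 'I_n -> 'rV[R]_d) (xs : 'I_m -> 'rV[R]_d)
  (i : aug_idx n m) : 'rV[R]_d :=
  match i with inl i0 => x i0 | inr p => xs p.1 end.

Definition augY (n m : nat) (y : 'I_n -> 'I_L) (i : aug_idx n m) : 'I_L :=
  match i with inl i0 => y i0 | inr p => p.2 end.

Definition augC (n m : nat) (C Cs : R) (i : aug_idx n m) : R :=
  match i with inl _ => C | inr _ => Cs end.

Definition auge (n m : nat) (y : 'I_n -> 'I_L) (Delta : R)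
  (i : aug_idx n m) (l : 'I_L) : R :=
  match i with
  | inl i0 => 1 - kdelta (y i0) l
  | inr p => - Delta * (1 - kdelta p.2 l)
  end.

Definition is_min_value (T : Type) (P : T -> Prop) (f : T -> R) (v : R) : Prop :=
  (exists t, P t /\ f t = v) /\ (forall t, P t -> v <= f t).

End Defs.

(* Main.v *)
Require Import Defs.
From mathcomp Require Import all_boot all_order all_algebra.
Import Order.TTheory GRing.Theory Num.Theory.
Local Open Scope ring_scope.

Lemma maxL_ub (R : realFieldType) (L : nat) (f : 'I_L -> R) l : f l <= maxL f.
Proof. exact: le_bigmax. Qed.

Lemma maxL_attain (R : realFieldType) (L : nat) (f : 'I_L -> R) (k : 'I_L) :
  exists l, maxL f = f l.
Proof.
rewrite /maxL.
have hidx : exists l, head 0 [seq f l | l <- enum 'I_L] = f l.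
  case E: (enum 'I_L) => [|e s].
    by have := mem_enum predT k; rewrite E.
  by exists e.
elim/big_ind: _ => //.
move=> _ _ [a ->] [b ->].
have [h|h] := leP (f a) (f b).
  by exists b.
  by exists a.
by move=> i _; exists i.
Qed.

Lemma dotpB (R : realFieldType) (d : nat) (u v w : 'rV[R]_d) :
  dotp (u - v) w = dotp u w - dotp v w.
Proof. by rewrite /dotp -sumrB; apply: eq_bigr => j _; rewrite !mxE mulrBl. Qed.

Lemma split_cs (R : realFieldType) (d L n m : nat) (C Cs : R)
  (W : 'I_L -> 'rV[R]_d) (xi : aug_idx L n m -> R) :
  cs_obj (augC C Cs) W xi = reg W + (\sum_(i<n) C * xi (inl i) +
     \sum_(i'<m) \sum_(k<L) Cs * xi (inr (i',k))).
Proof.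
rewrite /cs_obj big_sumType /=; congr (_ + (_ + _)).
by rewrite pair_big /=; apply: eq_bigr => -[a b].
Qed.

Lemma abstract_opt (T1 T2 W : Type) (P1 : W -> T1 -> Prop) (P2 : W -> T2 -> Prop)
  (R : realFieldType) (f1 : W -> T1 -> R) (f2 : W -> T2 -> R) :
  (forall w, exists v, is_min_value (P1 w) (f1 w) v /\ is_min_value (P2 w) (f2 w) v) ->
  forall w, (exists t, P1 w t /\ forall w' t', P1 w' t' -> f1 w t <= f1 w' t') <->
            (exists t, P2 w t /\ forall w' t', P2 w' t' -> f2 w t <= f2 w' t').
Proof.
move=> H w; have [v [[[t1 [h1 e1]] l1] [[t2 [h2 e2]] l2]]] := H w.
split=> -[t [ht hopt]].
  exists t2; split=> // w' t' h'.
  have [v' [[[s1 [g1 e1']] k1] [[s2 [g2 e2']] k2]]] := H w'.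
  rewrite e2; apply: le_trans (k2 _ h').
  by rewrite -e1'; apply: le_trans (l1 _ ht) _; exact: hopt.
exists t1; split=> // w' t' h'.
have [v' [[[s1 [g1 e1']] k1] [[s2 [g2 e2']] k2]]] := H w'.
rewrite e1; apply: le_trans (k1 _ h').
by rewrite -e2'; apply: le_trans (l2 _ ht) _; exact: hopt.
Qed.

From mathcomp Require Import lra.

Lemma dotp0 (R : realFieldType) (d : nat) (w : 'rV[R]_d) : dotp 0 w = 0.
Proof. by rewrite /dotp big1 // => j _; rewrite mxE mul0r. Qed.

Theorem proposition2 (R : realFieldType) (d L n m : nat)
  (x : 'I_n -> 'rV[R]_d) (y : 'I_n -> 'I_L) (xs : 'I_m -> 'rV[R]_d)
  (C Cs Delta : R) (hC : 0 < C) (hCs : 0 < Cs) (hDelta : 0 <= Delta) :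
  (* for every fixed W, minimizing over the slacks gives the same value *)
  (forall W : 'I_L -> 'rV[R]_d, exists v : R,
     is_min_value
       (fun p : ('I_n -> R) * ('I_m -> 'I_L -> R) => mu_feas x y xs Delta W p.1 p.2)
       (fun p => mu_obj C Cs W p.1 p.2) v /\
     is_min_value
       (fun xi : aug_idx L n m -> R =>
          cs_feas (augX x xs) (@augY L n m y) (@auge R L n m y Delta) W xi)
       (fun xi => cs_obj (@augC R L n m C Cs) W xi) v)
  /\
  (* hence the same optimal solutions in W *)
  (forall W : 'I_L -> 'rV[R]_d,
     (exists xi zeta, mu_feas x y xs Delta W xi zeta /\
        forall W' xi' zeta', mu_feas x y xs Delta W' xi' zeta' ->
          mu_obj C Cs W xi zeta <= mu_obj C Cs W' xi' zeta')
     <->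
     (exists xi : aug_idx L n m -> R,
        cs_feas (augX x xs) (@augY L n m y) (@auge R L n m y Delta) W xi /\
        forall W' (xi' : aug_idx L n m -> R),
          cs_feas (augX x xs) (@augY L n m y) (@auge R L n m y Delta) W' xi' ->
          cs_obj (@augC R L n m C Cs) W xi <= cs_obj (@augC R L n m C Cs) W' xi')).
Proof.
have part1 : forall W : 'I_L -> 'rV[R]_d, exists v : R,
     is_min_value
       (fun p : ('I_n -> R) * ('I_m -> 'I_L -> R) => mu_feas x y xs Delta W p.1 p.2)
       (fun p => mu_obj C Cs W p.1 p.2) v /\
     is_min_value
       (fun xi : aug_idx L n m -> R =>
          cs_feas (augX x xs) (@augY L n m y) (@auge R L n m y Delta) W xi)
       (fun xi => cs_obj (@augC R L n m C Cs) W xi) v.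
  move=> W.
  pose xi0 (i : 'I_n) := \big[Num.max/0]_(l < L)
      (1 - kdelta R (y i) l - dotp (W (y i) - W l) (x i)).
  pose a (i' : 'I_m) (l : 'I_L) := dotp (W l) (xs i').
  pose z (i' : 'I_m) (k : 'I_L) := Num.max 0 (`|a i' k - maxL (a i')| - Delta).
  pose xiC (i : aug_idx L n m) := match i with inl i0 => xi0 i0 | inr p => z p.1 p.2 end.
  have xi0_feas : forall i l, 1 - kdelta R (y i) l - xi0 i <= dotp (W (y i) - W l) (x i).
    move=> i l.
    have := le_bigmax 0 (fun l => 1 - kdelta R (y i) l - dotp (W (y i) - W l) (x i)) l.
    rewrite -/(xi0 i) => h; lra.
  have xi0_min : forall i (t : R), (forall l, 1 - kdelta R (y i) l - t <= dotp (W (y i) - W l) (x i)) ->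
      xi0 i <= t.
    move=> i t ht; apply: bigmax_le => [|l _].
      have := ht (y i); rewrite /kdelta eqxx [W _ - W _]subrr dotp0 /= ?mulr1n => h; lra.
    have := ht l => h; lra.
  have zge0 : forall i' k, 0 <= z i' k by move=> i' k; rewrite le_max lexx.
  have zge : forall i' k, `|a i' k - maxL (a i')| - Delta <= z i' k.
    by move=> i' k; rewrite le_max lexx orbT.
  have zmin : forall i' k t, 0 <= t -> `|a i' k - maxL (a i')| - Delta <= t -> z i' k <= t.
    by move=> i' k t h1 h2; rewrite ge_max h1 h2.
  have hnorm : forall i' k, `|a i' k - maxL (a i')| = maxL (a i') - a i' k.
    move=> i' k; rewrite ler0_norm ?opprB // subr_le0; exact: maxL_ub.
  have cs_feasC : cs_feas (augX x xs) (@augY L n m y) (@auge R L n m y Delta) W xiC.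
    move=> [i|[i' k]] l /=; first exact: xi0_feas.
    rewrite dotpB -/(a i' k) -/(a i' l).
    have := zge0 i' k; have := zge i' k; rewrite hnorm.
    have := @maxL_ub _ _ (a i') l.
    rewrite /kdelta; case: eqP => [->|_] /=; rewrite ?mulr1n ?mulr0n ?subrr ?dotp0; lra.
  have cs_lb : forall xi', cs_feas (augX x xs) (@augY L n m y) (@auge R L n m y Delta) W xi' ->
      (forall i, xi0 i <= xi' (inl i)) /\ (forall i' k, z i' k <= xi' (inr (i', k))).
    move=> xi' hf; split.
      by move=> i; apply: xi0_min => l; exact: (hf (inl i) l).
    move=> i' k.
    have h0 : 0 <= xi' (inr (i', k)).
      have := hf (inr (i', k)) k; rewrite /= /kdelta eqxx [W _ - W _]subrr dotp0 /= ?mulr1n => h; lra.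
    apply: zmin => //; rewrite hnorm.
    have [ls els] := @maxL_attain _ _ (a i') k; rewrite els.
    have := hf (inr (i', k)) ls; rewrite /= dotpB -/(a i' k) -/(a i' ls) /kdelta.
    case: eqP => [->|_] /=; rewrite ?mulr1n ?mulr0n ?subrr ?dotp0 => h; lra.
  exists (mu_obj C Cs W xi0 z); split; split.
  - exists (xi0, z); split => //; split => /=; first exact: xi0_feas.
    by move=> i' k; split=> //; have := zge i' k; rewrite /a => h; lra.
  - move=> [xi zeta] /= [h1 h2]; rewrite /mu_obj.
    apply: lerD; first apply: lerD => //.
      apply: ler_wpM2l; first exact: ltW.
      by apply: ler_sum => i _; apply: xi0_min; exact: h1.
    apply: ler_wpM2l; first exact: ltW.
    apply: ler_sum => i' _; apply: ler_sum => k _.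
    have [g1 g2] := h2 i' k; apply: zmin => //; rewrite /a; lra.
  - exists xiC; split => //.
    rewrite split_cs /mu_obj addrA mulr_sumr; congr (_ + _ + _).
    by rewrite mulr_sumr; apply: eq_bigr => i' _; rewrite mulr_sumr.
  - move=> xi' hf; have [l1 l2] := cs_lb xi' hf.
    rewrite split_cs /mu_obj -addrA; apply: lerD => //.
    rewrite mulr_sumr mulr_sumr; apply: lerD.
      by apply: ler_sum => i _; apply: ler_wpM2l; [exact: ltW | exact: l1].
    apply: ler_sum => i' _; rewrite mulr_sumr; apply: ler_sum => k _.
    by apply: ler_wpM2l; [exact: ltW | exact: l2].
split=> //.
move=> W.
have := @abstract_opt _ _ _ (fun W (p : ('I_n -> R) * ('I_m -> 'I_L -> R)) => mu_feas x y xs Delta W p.1 p.2)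
  (fun W (xi : aug_idx L n m -> R) => cs_feas (augX x xs) (@augY L n m y) (@auge R L n m y Delta) W xi) R
  (fun W p => mu_obj C Cs W p.1 p.2)
  (fun W xi => cs_obj (@augC R L n m C Cs) W xi) part1 W.
move=> [H1 H2]; split.
  move=> [xi [zeta [hf ho]]]; apply: H1; exists (xi, zeta); split => //.
  by move=> W' [xi' zeta'] /= h; exact: ho.
move=> h; have [[xi zeta] [hf ho]] := H2 h; exists xi, zeta; split => //.
by move=> W' xi' zeta' h'; exact: (ho W' (xi', zeta')).
Qed.
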